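(* Let $h>0$, $C\neq 0$ and $n\neq 0$ be real constants, and let $F,Z,U:(0,\infty)\to\mathbb{R}$ be smooth with $Z(\phi)\neq 0$ for all $\phi>0$. Consider the ODE for $\phi=\phi(t)>0$, $t>0$, $$2Z(\phi)\Bigl(\phi''+\frac{h}{t}\phi'\Bigr)=C\,t^{-2}F'(\phi)-Z'(\phi)\,\phi'^2-2U'(\phi).$$ This ODE is invariant under the scaling group $(t,\phi)\mapsto(\lambda t,\lambda^n\phi)$, $\lambda>0$ (equivalently, admits the Lie point symmetry $t\partial_t+n\phi\partial_\phi$), if and only if there are constants $Z_0\neq 0$, $m$, $F_1$, $U_1$ such that for all $\phi>0$ $$Z(\phi)=Z_0\phi^{-m},\qquad F'(\phi)=F_1\phi^{1-m},\qquad U'(\phi)=U_1\phi^{\frac{n-2}{n}-m}.$$ Consequently, in the invariant case: if $m\neq 2$ then $F(\phi)=C_1+F_0\phi^{2-m}$ for constants $C_1,F_0$; and if $mn-2n+2\neq 0$ then $U(\phi)=C_2+U_0\phi^{-\frac{mn-2n+2}{n}}$ for constants $C_2,U_0$. For the invariant power-law $\phi=\phi_0 t^n$ one has $Z(\phi)=Z_0\phi_0^{-m}t^{-nm}$.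
   Context: This ODE is the scalar-field equation $2Z\square\phi=F'(\phi)R-Z'(\phi)\phi_{,\alpha}\phi^{,\alpha}-2U'(\phi)$ of the generalized scalar-tensor theory with action $\frac{1}{8\pi}\int\sqrt{-g}\{\frac12[F(\phi)R-Z(\phi)\phi_{,\alpha}\phi^{,\alpha}-2U(\phi)]+\mathcal{L}_M\}$, for a homogeneous field $\phi(t)$ on a self-similar spatially homogeneous background with $H=h/t$ and scalar curvature $R=Ct^{-2}$. An ODE $\phi''=\Phi(t,\phi,\phi')$ is called invariant under the scaling group $(t,\phi)\mapsto(\lambda t,\lambda^n\phi)$ if $\Phi(\lambda t,\lambda^n\phi,\lambda^{n-1}p)=\lambda^{n-2}\Phi(t,\phi,p)$ for all $\lambda>0$, $t>0$, $\phi>0$, $p\in\mathbb{R}$. The time variable may be shifted, $t\to t+t_0$. *)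

(* Defs.v *)
From Stdlib Require Import Reals.
Open Scope R_scope.

Definition smooth_pos (f : R -> R) : Prop :=
  exists D : nat -> R -> R,
    (forall x, 0 < x -> D O x = f x) /\
    (forall k x, 0 < x -> derivable_pt_lim (D k) x (D (S k) x)).

Definition deriv_pos (F dF : R -> R) : Prop :=
  forall x, 0 < x -> derivable_pt_lim F x (dF x).

(* Right-hand side Phi(t, phi, p) of the ODE phi'' = Phi(t, phi, phi'),
   obtained from  2 Z (phi'' + (h/t) phi') = C t^-2 F'(phi) - Z'(phi) phi'^2 - 2 U'(phi). *)
Definition Phi (h C : R) (dF Z dZ dU : R -> R) (t ph p : R) : R :=
  - (h / t) * p + (C * / (t ^ 2) * dF ph - dZ ph * p ^ 2 - 2 * dU ph) / (2 * Z ph).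

Definition scale_invariant (n : R) (Phi : R -> R -> R -> R) : Prop :=
  forall lam t ph p, 0 < lam -> 0 < t -> 0 < ph ->
    Phi (lam * t) (Rpower lam n * ph) (Rpower lam (n - 1) * p)
    = Rpower lam (n - 2) * Phi t ph p.

(* Main.v *)
Require Import Defs.
From Stdlib Require Import Reals Lra.
Open Scope R_scope.

Lemma Rpow_pos x y : 0 < Rpower x y.
Proof. unfold Rpower; apply exp_pos. Qed.

Lemma Rpower_base1 z : Rpower 1 z = 1.
Proof. unfold Rpower; rewrite ln_1, Rmult_0_r; apply exp_0. Qed.

Lemma dpl_ext_pos f g x l : 0 < x -> (forall y, 0 < y -> f y = g y) ->
  derivable_pt_lim f x l -> derivable_pt_lim g x l.
Proof.
  intros Hx E D eps Heps. destruct (D eps Heps) as [d Hd].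
  assert (Hp : 0 < Rmin d (x/2)) by (apply Rmin_pos; [apply cond_pos|lra]).
  exists (mkposreal _ Hp). intros hh Hh0 Hlt. simpl in Hlt.
  pose proof (Rmin_l d (x/2)). pose proof (Rmin_r d (x/2)).
  apply Rabs_def2 in Hlt as [Hl1 Hl2].
  rewrite <- !E by lra. apply Hd; auto.
  apply Rabs_def1; lra.
Qed.

Lemma zero_deriv_const f : (forall x, 0 < x -> derivable_pt_lim f x 0) ->
  forall x, 0 < x -> f x = f 1.
Proof.
  intros Hd x Hx.
  set (a := Rmin x 1). set (b := Rmax x 1).
  assert (Ha : 0 < a) by (apply Rmin_pos; lra).
  assert (pr : forall y, a < y < b -> derivable_pt f y).
  { intros y Hy. exists 0. apply Hd. lra. }
  assert (K := null_derivative_loc f a b pr).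
  assert (Hc : forall y, a <= y <= b -> continuity_pt f y).
  { intros y Hy. apply derivable_continuous_pt. exists 0. apply Hd. lra. }
  assert (Hz : forall y (P : a < y < b), derive_pt f y (pr y P) = 0).
  { intros y P. apply derive_pt_eq_0. apply Hd. lra. }
  specialize (K Hc Hz).
  pose proof (Rmin_l x 1). pose proof (Rmin_r x 1).
  pose proof (Rmax_l x 1). pose proof (Rmax_r x 1).
  fold a b in H, H0, H1, H2.
  rewrite (K x) by lra. rewrite (K 1) by lra. reflexivity.
Qed.

Lemma deriv_sub_pow f df k e x : 0 < x -> derivable_pt_lim f x df ->
  derivable_pt_lim (fun y => f y - k * Rpower y e) x (df - k * (e * Rpower x (e - 1))).
Proof.
  intros Hx Hf.
  apply (derivable_pt_lim_minus f (mult_real_fct k (fun y => Rpower y e))); auto.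
  apply derivable_pt_lim_scal. apply derivable_pt_lim_power; auto.
Qed.

Lemma Phi_eq h C dF Z dZ dU t ph p : Z ph <> 0 -> t <> 0 ->
  Phi h C dF Z dZ dU t ph p =
  - (h * / t) * p + C * (/ t) ^ 2 * (dF ph / (2 * Z ph))
   - p ^ 2 * (dZ ph / (2 * Z ph)) - dU ph / Z ph.
Proof. intros. unfold Phi. field. auto. Qed.

Lemma pow_rel lam n : 0 < lam ->
  Rpower lam (n - 1) = Rpower lam (n - 2) * lam /\
  Rpower lam n = Rpower lam (n - 2) * lam * lam.
Proof.
  intros Hl. split.
  - replace (n - 1) with ((n - 2) + 1) by ring. rewrite Rpower_plus, Rpower_1; auto.
  - replace n with ((n - 2) + 1 + 1) at 1 by ring. rewrite !Rpower_plus, Rpower_1; auto.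
Qed.

Lemma conds_of_inv h C n dF Z dZ dU : C <> 0 ->
  (forall ph, 0 < ph -> Z ph <> 0) ->
  scale_invariant n (Phi h C dF Z dZ dU) ->
  forall lam ph, 0 < lam -> 0 < ph ->
   let a := Rpower lam n in let c := Rpower lam (n - 2) in let x := a * ph in
   dZ x * a * Z ph = dZ ph * Z x /\
   dF x * Z ph = a * dF ph * Z x /\
   dU x * Z ph = c * dU ph * Z x.
Proof.
  intros HC HZ Hinv lam ph Hl Hph a c x.
  assert (Hx : 0 < x) by (unfold x, a; pose proof (Rpow_pos lam n); nra).
  assert (Hc : 0 < c) by apply Rpow_pos.
  destruct (pow_rel lam n Hl) as [Eb Ea].
  pose proof (Hinv lam 1 ph 0 Hl ltac:(lra) Hph) as H1.
  pose proof (Hinv lam 2 ph 0 Hl ltac:(lra) Hph) as H2.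
  pose proof (Hinv lam 1 ph 1 Hl ltac:(lra) Hph) as H3.
  pose proof (Hinv lam 1 ph (-1) Hl ltac:(lra) Hph) as H4.
  fold a c x in H1, H2, H3, H4.
  pose proof (HZ x Hx) as Zx. pose proof (HZ ph Hph) as Zp.
  rewrite !Phi_eq in H1, H2, H3, H4 by (auto; lra).
  rewrite Eb in H1, H2, H3, H4. fold c in H1, H2, H3, H4.
  rewrite Rmult_1_r, Rinv_1 in H1, H3, H4.
  rewrite Rinv_mult in H2.
  set (il := / lam) in *.
  set (A := dF x / (2 * Z x)) in *. set (B := dZ x / (2 * Z x)) in *.
  set (D := dU x / Z x) in *.
  set (A' := dF ph / (2 * Z ph)) in *. set (B' := dZ ph / (2 * Z ph)) in *.
  set (D' := dU ph / Z ph) in *.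
  assert (E1 : C * il ^ 2 * A = c * C * A') by lra.
  assert (E2 : D = c * D') by lra.
  assert (E3 : (c * lam) ^ 2 * B = c * B') by lra.
  assert (Hil : il * lam = 1) by (unfold il; field; lra).
  assert (Ea' : a = c * lam * lam) by (unfold a; rewrite Ea; reflexivity).
  split; [|split].
  - assert (E3' : B * a = B') .
    { apply (Rmult_eq_reg_l c); [|lra]. rewrite <- E3, Ea'. ring. }
    unfold B, B' in E3'.
    replace (dZ ph) with (dZ ph / (2 * Z ph) * (2 * Z ph)) by (field; auto).
    rewrite <- E3'. field. auto.
  - assert (E1' : A = a * A').
    { apply (Rmult_eq_reg_l (C * il ^ 2)).
      - rewrite E1, Ea'. replace (C * il ^ 2 * (c * lam * lam * A')) with (c * C * A' * (il * lam) ^ 2) by ring.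
        rewrite Hil. ring.
      - apply Rmult_integral_contrapositive; split; auto. apply pow_nonzero. unfold il. apply Rinv_neq_0_compat; lra. }
    unfold A, A' in E1'.
    replace (dF x) with (dF x / (2 * Z x) * (2 * Z x)) by (field; auto).
    rewrite E1'. field. auto.
  - unfold D, D' in E2.
    replace (dU x) with (dU x / Z x * Z x) by (field; auto).
    rewrite E2. field. auto.
Qed.

Lemma forms_of_conds n Z dF dZ dU : n <> 0 ->
  deriv_pos Z dZ -> (forall ph, 0 < ph -> Z ph <> 0) ->
  (forall lam ph, 0 < lam -> 0 < ph ->
   let a := Rpower lam n in let c := Rpower lam (n - 2) in let x := a * ph in
   dZ x * a * Z ph = dZ ph * Z x /\
   dF x * Z ph = a * dF ph * Z x /\
   dU x * Z ph = c * dU ph * Z x) ->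
  exists Z0 m F1 U1, Z0 <> 0 /\
     forall ph, 0 < ph ->
       Z ph = Z0 * Rpower ph (- m) /\
       dF ph = F1 * Rpower ph (1 - m) /\
       dU ph = U1 * Rpower ph ((n - 2) / n - m).
Proof.
  intros Hn HdZ HZ Hc.
  assert (Z1 : Z 1 <> 0) by (apply HZ; lra).
  set (g1 := dZ 1 / Z 1). set (f1 := dF 1 / Z 1). set (u1 := dU 1 / Z 1).
  assert (K : forall y, 0 < y ->
     dZ y = g1 * Z y / y /\ dF y = f1 * y * Z y /\
     dU y = u1 * Rpower y ((n - 2) / n) * Z y).
  { intros y Hy.
    destruct (Hc (Rpower y (/ n)) 1 (Rpow_pos _ _) ltac:(lra)) as [E1 [E2 E3]].
    rewrite Rpower_mult, Rinv_l, Rpower_1, Rmult_1_r in E1, E2, E3 by auto.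
    rewrite Rpower_mult in E3.
    replace (/ n * (n - 2)) with ((n - 2) / n) in E3 by (field; auto).
    unfold g1, f1, u1. repeat split.
    - replace (dZ y) with (dZ y * y * Z 1 / (y * Z 1)) by (field; split; auto; lra).
      rewrite E1. field. split; auto; lra.
    - replace (dF y) with (dF y * Z 1 / Z 1) by (field; auto).
      rewrite E2. field. auto.
    - replace (dU y) with (dU y * Z 1 / Z 1) by (field; auto).
      rewrite E3. field. auto. }
  assert (KZ : forall y, 0 < y -> Z y = Z 1 * Rpower y g1).
  { assert (W : forall y, 0 < y -> Z y * Rpower y (- g1) = Z 1 * Rpower 1 (- g1)).
    { apply (zero_deriv_const (fun y => Z y * Rpower y (- g1))).
      intros y Hy.
      replace 0 with (dZ y * Rpower y (- g1) + Z y * (- g1 * Rpower y (- g1 - 1))).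
      - apply (derivable_pt_lim_mult Z (fun y => Rpower y (- g1))); auto.
        apply derivable_pt_lim_power; auto.
      - destruct (K y Hy) as [-> _].
        replace (- g1 - 1) with (- g1 + - (1)) by ring.
        rewrite Rpower_plus, (Rpower_Ropp y 1), Rpower_1 by auto. field. lra. }
    intros y Hy. specialize (W y Hy). rewrite Rpower_base1, Rmult_1_r in W.
    rewrite Rpower_Ropp in W.
    replace (Z y) with (Z y * / Rpower y g1 * Rpower y g1)
      by (field; apply Rgt_not_eq, Rpow_pos). rewrite W. ring. }
  exists (Z 1), (- g1), (f1 * Z 1), (u1 * Z 1). split; auto.
  intros ph Hph. destruct (K ph Hph) as [_ [E2 E3]].
  rewrite Ropp_involutive. repeat split.
  - apply KZ; auto.
  - rewrite E2, KZ by auto.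
    replace (1 - - g1) with (1 + g1) by ring. rewrite Rpower_plus, Rpower_1 by auto. ring.
  - rewrite E3, KZ by auto.
    replace ((n - 2) / n - - g1) with ((n - 2) / n + g1) by ring.
    rewrite Rpower_plus. ring.
Qed.

Lemma inv_of_forms h C n Z dF dZ dU : n <> 0 ->
  deriv_pos Z dZ -> (forall ph, 0 < ph -> Z ph <> 0) ->
  (exists Z0 m F1 U1, Z0 <> 0 /\
     forall ph, 0 < ph ->
       Z ph = Z0 * Rpower ph (- m) /\
       dF ph = F1 * Rpower ph (1 - m) /\
       dU ph = U1 * Rpower ph ((n - 2) / n - m)) ->
  scale_invariant n (Phi h C dF Z dZ dU).
Proof.
  intros Hn HdZ HZ [Z0 [m [F1 [U1 [HZ0 Hf]]]]].
  assert (KZ : forall y, 0 < y -> dZ y = - m * Z y / y).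
  { intros y Hy.
    assert (D : derivable_pt_lim (fun y => Z0 * Rpower y (- m)) y (Z0 * (- m * Rpower y (- m - 1)))).
    { apply (derivable_pt_lim_scal (fun y => Rpower y (- m))). apply derivable_pt_lim_power; auto. }
    assert (D2 : derivable_pt_lim (fun y => Z0 * Rpower y (- m)) y (dZ y)).
    { apply (dpl_ext_pos Z); auto. intros z Hz. apply Hf; auto. }
    rewrite (uniqueness_limite _ _ _ _ D2 D).
    destruct (Hf y Hy) as [-> _].
    replace (- m - 1) with (- m + - (1)) by ring.
    rewrite Rpower_plus, (Rpower_Ropp y 1), Rpower_1 by auto. field. lra. }
  assert (KF : forall y, 0 < y -> dF y = F1 * y * Z y / Z0).
  { intros y Hy. destruct (Hf y Hy) as [E1 [E2 _]]. rewrite E2, E1.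
    replace (1 - m) with (1 + - m) by ring. rewrite Rpower_plus, Rpower_1 by auto. field. auto. }
  assert (KU : forall y, 0 < y -> dU y = U1 * Rpower y ((n - 2) / n) * Z y / Z0).
  { intros y Hy. destruct (Hf y Hy) as [E1 [_ E3]]. rewrite E3, E1.
    replace ((n - 2) / n - m) with ((n - 2) / n + - m) by ring. rewrite Rpower_plus. field. auto. }
  intros lam t ph p Hl Ht Hph.
  destruct (pow_rel lam n Hl) as [Eb Ea].
  assert (Hc : 0 < Rpower lam (n - 2)) by apply Rpow_pos.
  assert (Hx : 0 < Rpower lam n * ph) by (pose proof (Rpow_pos lam n); nra).
  assert (ER : Rpower (Rpower lam n * ph) ((n - 2) / n) = Rpower lam (n - 2) * Rpower ph ((n - 2) / n)).
  { rewrite <- Rpower_mult_distr by (auto; apply Rpow_pos). rewrite Rpower_mult.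
    replace (n * ((n - 2) / n)) with (n - 2) by (field; auto). reflexivity. }
  pose proof (HZ _ Hx) as Zx. pose proof (HZ _ Hph) as Zp.
  rewrite !Phi_eq by (auto; nra).
  rewrite (KZ _ Hx), (KF _ Hx), (KU _ Hx), (KZ _ Hph), (KF _ Hph), (KU _ Hph), ER, Eb.
  rewrite Ea in *. field. repeat split; auto; lra.
Qed.

Lemma antideriv_pow G dG K e : e <> 0 -> deriv_pos G dG ->
  (forall y, 0 < y -> dG y = K * Rpower y (e - 1)) ->
  exists C0 G0, forall y, 0 < y -> G y = C0 + G0 * Rpower y e.
Proof.
  intros He HG Hd.
  assert (W : forall y, 0 < y -> G y - K / e * Rpower y e = G 1 - K / e * Rpower 1 e).
  { apply (zero_deriv_const (fun y => G y - K / e * Rpower y e)).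
    intros y Hy. replace 0 with (dG y - K / e * (e * Rpower y (e - 1))).
    - apply deriv_sub_pow; auto.
    - rewrite Hd by auto. field. auto. }
  exists (G 1 - K / e * Rpower 1 e), (K / e). intros y Hy.
  rewrite <- (W y Hy). ring.
Qed.

Theorem mainTheorem2 (h C n : R) (F Z U dF dZ dU : R -> R) :
  0 < h -> C <> 0 -> n <> 0 ->
  smooth_pos F -> smooth_pos Z -> smooth_pos U ->
  deriv_pos F dF -> deriv_pos Z dZ -> deriv_pos U dU ->
  (forall ph, 0 < ph -> Z ph <> 0) ->
  (scale_invariant n (Phi h C dF Z dZ dU) <->
   exists Z0 m F1 U1, Z0 <> 0 /\
     forall ph, 0 < ph ->
       Z ph = Z0 * Rpower ph (- m) /\
       dF ph = F1 * Rpower ph (1 - m) /\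
       dU ph = U1 * Rpower ph ((n - 2) / n - m))
  /\
  (forall Z0 m F1 U1, Z0 <> 0 ->
     (forall ph, 0 < ph ->
       Z ph = Z0 * Rpower ph (- m) /\
       dF ph = F1 * Rpower ph (1 - m) /\
       dU ph = U1 * Rpower ph ((n - 2) / n - m)) ->
     (m <> 2 -> exists C1 F0, forall ph, 0 < ph ->
        F ph = C1 + F0 * Rpower ph (2 - m)) /\
     (m * n - 2 * n + 2 <> 0 -> exists C2 U0, forall ph, 0 < ph ->
        U ph = C2 + U0 * Rpower ph (- ((m * n - 2 * n + 2) / n))) /\
     (forall ph0 t, 0 < ph0 -> 0 < t ->
        Z (ph0 * Rpower t n) = Z0 * Rpower ph0 (- m) * Rpower t (- (n * m)))).
Proof.
  intros Hh HC Hn _ _ _ HF HdZ HU HZ. split.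
  { split.
    - intros Hinv. apply (forms_of_conds n Z dF dZ dU); auto.
      apply (conds_of_inv h C); auto.
    - apply inv_of_forms; auto. }
  intros Z0 m F1 U1 HZ0 Hf. split; [|split].
  - intros Hm. apply (antideriv_pow F dF F1); auto. lra.
    intros y Hy. replace (2 - m - 1) with (1 - m) by ring. apply Hf; auto.
  - intros Hm. apply (antideriv_pow U dU U1); auto.
    + intro E. apply Hm. apply (Rmult_eq_reg_r (/ n)). 2: apply Rinv_neq_0_compat; auto.
      replace (m * n - 2 * n + 2) with (- (- ((m * n - 2 * n + 2) / n)) * n) by (field; auto).
      rewrite E. ring.
    + intros y Hy. replace (- ((m * n - 2 * n + 2) / n) - 1) with ((n - 2) / n - m) by (field; auto).
      apply Hf; auto.
  - intros ph0 t H0 Ht.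
    assert (Hp : 0 < ph0 * Rpower t n) by (pose proof (Rpow_pos t n); nra).
    destruct (Hf _ Hp) as [-> _].
    rewrite <- Rpower_mult_distr by (auto; apply Rpow_pos). rewrite Rpower_mult.
    replace (n * - m) with (- (n * m)) by ring. ring.
Qed.
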